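(* Every monogenic ring of prime characteristic is finitely separable: if $a$ is an element of a ring with $pa=0$ for a prime $p$, then $\mathbb{Z}\langle a\rangle$ is finitely separable.
   Context: Rings are associative and not necessarily unital. $\mathbb{Z}\langle a\rangle=\{g(a): g\in\mathbb{Z}[x],\ g(0)=0\}$ is the subring generated by $a$. A ring $R$ is finitely separable if for every $r\in R$ and every subring $A\subseteq R$ with $r\notin A$ there exist a finite ring $F$ and a homomorphism $\varphi:R\to F$ with $\varphi(r)\notin\varphi(A)$. *)

(* Defs.v *)
From mathcomp Require Import all_boot all_order all_algebra.
Set Implicit Arguments. Unset Strict Implicit. Unset Printing Implicit Defensive.
Import GRing.Theory.

(* Associative, not necessarily unital rings (MathComp only has unital ones). *)
Record nuRing := NuRing {
  nu_car :> Type;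
  nu_zero : nu_car;
  nu_add : nu_car -> nu_car -> nu_car;
  nu_opp : nu_car -> nu_car;
  nu_mul : nu_car -> nu_car -> nu_car;
  nu_addA : forall x y z, nu_add x (nu_add y z) = nu_add (nu_add x y) z;
  nu_addC : forall x y, nu_add x y = nu_add y x;
  nu_add0r : forall x, nu_add nu_zero x = x;
  nu_addNr : forall x, nu_add (nu_opp x) x = nu_zero;
  nu_mulA : forall x y z, nu_mul x (nu_mul y z) = nu_mul (nu_mul x y) z;
  nu_mulDl : forall x y z, nu_mul (nu_add x y) z = nu_add (nu_mul x z) (nu_mul y z);
  nu_mulDr : forall x y z, nu_mul x (nu_add y z) = nu_add (nu_mul x y) (nu_mul x z)
}.

Section NuRingDefs.
Variable R : nuRing.

Fixpoint nu_natmul (n : nat) (x : R) : R :=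
  match n with 0 => nu_zero R | n'.+1 => nu_add (nu_natmul n' x) x end.

Definition nu_intmul (z : int) (x : R) : R :=
  match z with
  | Posz n => nu_natmul n x
  | Negz n => nu_opp (nu_natmul n.+1 x)
  end.

(* nu_pow1 a n = a^(n+1) *)
Fixpoint nu_pow1 (a : R) (n : nat) : R :=
  match n with 0 => a | n'.+1 => nu_mul (nu_pow1 a n') a end.

(* g(a) = sum_{1 <= i < size g} g_i a^i  (the constant coefficient is not used;
   it is required to be 0 in Zgen below) *)
Definition nu_evalZ (g : {poly int}) (a : R) : R :=
  foldr (@nu_add R) (nu_zero R)
        [seq nu_intmul g`_i%R (nu_pow1 a i.-1) | i <- iota 1 (size g).-1].

Definition Zgen (a : R) : R -> Prop :=
  fun x => exists g : {poly int}, g.[0%R]%R = 0%R /\ x = nu_evalZ g a.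

Definition is_subring (A : R -> Prop) : Prop :=
  [/\ A (nu_zero R),
      (forall x y, A x -> A y -> A (nu_add x (nu_opp y))) &
      (forall x y, A x -> A y -> A (nu_mul x y))].

End NuRingDefs.

Definition finite_type (T : Type) : Prop :=
  exists (n : nat) (f : 'I_n -> T), forall x : T, exists i, f i = x.

Definition hom_on (R F : nuRing) (S : R -> Prop) (phi : R -> F) : Prop :=
  (forall x y, S x -> S y -> phi (nu_add x y) = nu_add (phi x) (phi y)) /\
  (forall x y, S x -> S y -> phi (nu_mul x y) = nu_mul (phi x) (phi y)).

Definition finitely_separable_sub (R : nuRing) (S : R -> Prop) : Prop :=
  forall (r : R) (A : R -> Prop),
    S r -> is_subring A -> (forall x, A x -> S x) -> ~ A r ->
    exists (F : nuRing) (phi : R -> F),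
      finite_type F /\ hom_on S phi /\ ~ (exists x, A x /\ phi x = phi r).

Definition finitely_separable (R : nuRing) : Prop :=
  finitely_separable_sub (fun _ : R => True).

(* Main.v *)
Require Import Defs.
From HB Require Import structures.
From mathcomp Require Import all_boot all_order all_algebra.
From mathcomp Require Import boolp.
From mathcomp Require Import ring zify.
Set Implicit Arguments. Unset Strict Implicit. Unset Printing Implicit Defensive.
Import GRing.Theory.
Local Open Scope ring_scope.

Definition RT (R : nuRing) : Type := nu_car R.
HB.instance Definition _ (R : nuRing) := gen_eqMixin (RT R).
HB.instance Definition _ (R : nuRing) := gen_choiceMixin (RT R).
HB.instance Definition _ (R : nuRing) :=
  GRing.isZmodule.Build (RT R) (@nu_addA R) (@nu_addC R) (@nu_add0r R) (@nu_addNr R).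

Section U.
Variable R : nuRing.
Local Notation RT := (RT R).
Definition rmul (x y : RT) : RT := nu_mul x y.

Lemma rmulDr x : {morph rmul x : y z / y + z}.
Proof. move=> y z; exact: nu_mulDr. Qed.
Lemma rmulDl x : {morph rmul^~ x : y z / y + z}.
Proof. move=> y z; exact: nu_mulDl. Qed.
Lemma rmul0r x : rmul 0 x = 0.
Proof. by apply/(@addrI _ (rmul 0 x)); rewrite -rmulDl !addr0. Qed.
Lemma rmulr0 x : rmul x 0 = 0.
Proof. by apply/(@addrI _ (rmul x 0)); rewrite -rmulDr !addr0. Qed.
Lemma rmulNr x y : rmul (- x) y = - rmul x y.
Proof. by apply/(@addrI _ (rmul x y)); rewrite -rmulDl !subrr rmul0r. Qed.
Lemma rmulrN x y : rmul x (- y) = - rmul x y.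
Proof. by apply/(@addrI _ (rmul x y)); rewrite -rmulDr !subrr rmulr0. Qed.
Lemma rmulrn x y n : rmul x (y *+ n) = rmul x y *+ n.
Proof. by elim: n => [|n IH]; rewrite ?rmulr0 // !mulrS rmulDr IH. Qed.
Lemma rmulnr x y n : rmul (x *+ n) y = rmul x y *+ n.
Proof. by elim: n => [|n IH]; rewrite ?rmul0r // !mulrS rmulDl IH. Qed.
Lemma rmulrz x y n : rmul x (y *~ n) = rmul x y *~ n.
Proof. by case: n => n; rewrite /intmul ?rmulrN rmulrn. Qed.
Lemma rmulzr x y n : rmul (x *~ n) y = rmul x y *~ n.
Proof. by case: n => n; rewrite /intmul ?rmulNr rmulnr. Qed.
Lemma rmulA : associative rmul.
Proof. move=> x y z; exact: nu_mulA. Qed.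

Definition U : Type := (int * RT)%type.
HB.instance Definition _ := GRing.Zmodule.on U.
Definition uone : U := (1, 0).
Definition umul (u v : U) : U :=
  (u.1 * v.1, v.2 *~ u.1 + u.2 *~ v.1 + rmul u.2 v.2).

Lemma umulA : associative umul.
Proof.
move=> [m x] [n y] [k z]; rewrite /umul /=; congr (_, _); first by rewrite mulrA.
rewrite !rmulDl !rmulDr rmulzr rmulrz !rmulzr !rmulrz rmulA.
rewrite !mulrzDl -!mulrzA.
rewrite (mulrC n m) (mulrC k m) -!addrA; congr (_ + (_ + _)).
rewrite addrCA; congr (_ + _).
rewrite [RHS]addrCA; congr (_ + _).
by rewrite addrCA.
Qed.

Lemma umul1 : left_id uone umul.
Proof. by move=> [m x]; rewrite /umul /= mul1r rmul0r mul0rz !addr0 mulr1z. Qed.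
Lemma umulr1 : right_id uone umul.
Proof. by move=> [m x]; rewrite /umul /= mulr1 rmulr0 mul0rz add0r mulr1z addr0. Qed.
Lemma umulDl : left_distributive umul +%R.
Proof.
move=> [m x] [n y] [k z]; rewrite /umul /=; congr (_, _); first by rewrite mulrDl.
rewrite rmulDl mulrzDr mulrzDl /=.
by rewrite (addrACA (z *~ m)) (addrACA (z *~ m + x *~ k)).
Qed.
Lemma umulDr : right_distributive umul +%R.
Proof.
move=> [m x] [n y] [k z]; rewrite /umul /=; congr (_, _); first by rewrite mulrDr.
rewrite rmulDr mulrzDr mulrzDl /=.
by rewrite (addrACA (y *~ m)) (addrACA (y *~ m + x *~ n)).
Qed.
Lemma uone_neq0 : uone != 0.
Proof. by apply/eqP => -[]. Qed.
End U.

HB.instance Definition _ (R : nuRing) := GRing.Zmodule_isNzRing.Build (U R)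
  (@umulA R) (@umul1 R) (@umulr1 R) (@umulDl R) (@umulDr R) (@uone_neq0 R).

Section Ev.
Variables (R : nuRing) (a : R).
Local Notation RT := (RT R).
Local Notation U := (U R).
Definition u0 : U := (0, a : RT).
Lemma cfu0 : commr_rmorph (intr : int -> U) u0.
Proof. move=> z; exact: commr_int. Qed.
Definition H (g : {poly int}) : U := horner_morph cfu0 g.
Definition ev (g : {poly int}) : RT := (H g).2.

Lemma HD g h : H (g + h) = H g + H h.
Proof. by rewrite /H rmorphD. Qed.
Lemma HM g h : H (g * h) = H g * H h.
Proof. by rewrite /H rmorphM. Qed.
Lemma HB g h : H (g - h) = H g - H h.
Proof. by rewrite /H rmorphB. Qed.

Lemma U_mul2 (u v : U) : (u * v).2 = v.2 *~ u.1 + u.2 *~ v.1 + rmul u.2 v.2.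
Proof. by []. Qed.
Lemma U_mul1 (u v : U) : (u * v).1 = u.1 * v.1.
Proof. by []. Qed.
Lemma U_muln (u : U) n : u *+ n = (u.1 *+ n, u.2 *+ n).
Proof. by elim: n => [|n IH] //; rewrite !mulrS IH. Qed.
Lemma U_mulz (u : U) z : u *~ z = (u.1 *~ z, u.2 *~ z).
Proof. by case: z => n; rewrite /intmul U_muln. Qed.
Lemma U_intr z : (z%:~R : U) = (z, 0).
Proof. by rewrite U_mulz /= intz mul0rz. Qed.
Lemma U_sum2 (I : Type) (s : seq I) (P : pred I) (F : I -> U) :
  (\sum_(i <- s | P i) F i).2 = \sum_(i <- s | P i) (F i).2.
Proof. by apply: (big_morph snd) => //. Qed.
Lemma U_sum1 (I : Type) (s : seq I) (P : pred I) (F : I -> U) :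
  (\sum_(i <- s | P i) F i).1 = \sum_(i <- s | P i) (F i).1.
Proof. by apply: (big_morph fst) => //. Qed.

Lemma Hcoef g : H g = \sum_(i < size g) (g`_i)%:~R * u0 ^+ i.
Proof.
rewrite /H /horner_morph (@horner_coef_wide _ (size g)); last exact: size_poly.
by apply: eq_bigr => i _; rewrite coef_map.
Qed.

Lemma u0X1 i : u0 ^+ i.+1 = (0, nu_pow1 a i : RT).
Proof.
elim: i => [|i IH]; first by rewrite expr1.
rewrite exprSr IH; have -> : forall u v : U, u * v = umul u v by [].
by rewrite /umul /= mul0r !mulr0z !add0r.
Qed.

Lemma u0X1_1 i : (u0 ^+ i).1 = (i == 0%N)%:R.
Proof. by case: i => [|i]; rewrite ?expr0 ?u0X1. Qed.

Lemma ev_sum g : ev g = \sum_(i < size g) (u0 ^+ i).2 *~ g`_i.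
Proof.
rewrite /ev Hcoef U_sum2; apply: eq_bigr => i _.
by rewrite U_mul2 U_intr /= mul0rz rmul0r !addr0.
Qed.

Lemma H1 g : (H g).1 = g`_0.
Proof.
rewrite Hcoef U_sum1; case E: (size g) => [|n].
  by rewrite big_ord0 nth_default ?E.
rewrite big_ord_recl big1 ?addr0 => [|i _]; rewrite U_mul1 u0X1_1 U_intr /=.
  by rewrite mulr1.
by rewrite mulr0.
Qed.

Lemma nu_natmulE n (x : R) : nu_natmul n x = (x : RT) *+ n.
Proof. elim: n => [|n IH]; first reflexivity. rewrite /= IH mulrSr. reflexivity. Qed.
Lemma nu_intmulE z (x : R) : nu_intmul z x = (x : RT) *~ z.
Proof. by case: z => n; rewrite /nu_intmul nu_natmulE. Qed.

Lemma foldr_sum (s : seq RT) : foldr (@nu_add R) (nu_zero R) s = \sum_(x <- s) x.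
Proof. elim: s => [|x s IH]; rewrite ?big_nil ?big_cons /=; first reflexivity. by rewrite IH. Qed.

Lemma evalZ_ev g : nu_evalZ g a = ev g.
Proof.
rewrite /nu_evalZ foldr_sum ev_sum big_map.
case: (size g) => [|n]; first by rewrite big_nil big_ord0.
rewrite big_ord_recl expr0 /= mul0rz add0r.
rewrite -(big_mkord xpredT (fun i => (u0 ^+ i.+1).2 *~ g`_i.+1)).
rewrite /index_iota subn0 -[1%N](addn0 1) iotaDl big_map.
by apply: eq_bigr => i _; rewrite nu_intmulE u0X1 add1n.
Qed.
End Ev.

Section EvP.
Variables (R : nuRing) (a : R) (p : nat).
Hypothesis pp : prime p.
Hypothesis pa : nu_natmul p a = nu_zero R.
Local Notation RT := (RT R).
Local Notation ev := (ev a).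

Lemma evB (u v : {poly int}) : ev (u - v) = ev u - ev v.
Proof. by rewrite /ev HB. Qed.
Lemma evD (u v : {poly int}) : ev (u + v) = ev u + ev v.
Proof. by rewrite /ev HD. Qed.

Lemma pow1_p i : (nu_pow1 a i : RT) *~ p = 0.
Proof.
elim: i => [|i IH] /=; first by rewrite -pmulrn -nu_natmulE pa.
by rewrite -[nu_mul _ _]/(rmul _ _) -rmulrz -pmulrn -nu_natmulE pa rmulr0.
Qed.

Lemma ev_p0 (u : {poly int}) : (forall i, (p %| u`_i)%Z) -> ev u = 0.
Proof.
move=> Hu; rewrite ev_sum big1 // => -[[|i] Hi] _ /=.
  by rewrite mul0rz.
by rewrite u0X1 /= -(divzK (Hu i.+1)) mulrC mulrzA pow1_p mul0rz.
Qed.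

Lemma ev_eqp (u v : {poly int}) : map_poly (intr : int -> 'F_p) u = map_poly intr v -> ev u = ev v.
Proof.
move=> E; apply/eqP; rewrite -subr_eq0 -evB; apply/eqP; apply: ev_p0 => i.
rewrite (dvdz_pcharf (pchar_Fp pp)) -coef_map rmorphB /= E subrr coef0 //.
Qed.

Definition liftp (g : {poly 'F_p}) : {poly int} := map_poly (fun c : 'F_p => (c : nat)%:Z) g.
Lemma map_liftp g : map_poly (intr : int -> 'F_p) (liftp g) = g.
Proof.
apply/polyP => i; rewrite coef_map /= coef_map_id0 //.
by rewrite -[RHS]natr_Zp.
Qed.
Lemma liftp0 g : (liftp g)`_0 = (nat_of_ord (g`_0))%:Z.
Proof. by rewrite coef_map_id0. Qed.

Definition Psi (g : {poly 'F_p}) : RT := ev (liftp g).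
Lemma PsiD (g h : {poly 'F_p}) : Psi (g + h) = Psi g + Psi h.
Proof. by rewrite /Psi -evD; apply: ev_eqp; rewrite rmorphD /= !map_liftp. Qed.
Lemma PsiB (g h : {poly 'F_p}) : Psi (g - h) = Psi g - Psi h.
Proof. by rewrite /Psi -evB; apply: ev_eqp; rewrite rmorphB /= !map_liftp. Qed.
Lemma Psi0 : Psi 0 = 0.
Proof. by apply/(@addrI _ (Psi 0)); rewrite -PsiD !addr0. Qed.
Lemma PsiMn (g : {poly 'F_p}) n : Psi (g *+ n) = Psi g *+ n.
Proof. by elim: n => [|n IH]; rewrite ?mulr0n ?Psi0 // !mulrS PsiD IH. Qed.
Lemma PsiM (g h : {poly 'F_p}) : g`_0 = 0 -> h`_0 = 0 -> Psi (g * h) = rmul (Psi g) (Psi h).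
Proof.
move=> g0 h0; rewrite /Psi.
have -> : ev (liftp (g * h)) = ev (liftp g * liftp h).
  by apply: ev_eqp; rewrite rmorphM /= !map_liftp.
by rewrite /ev HM U_mul2 !H1 !liftp0 g0 h0 !mulr0z !add0r.
Qed.

Lemma Zgen_Psi x : Zgen a x -> exists g : {poly 'F_p}, g`_0 = 0 /\ Psi g = x.
Proof.
case=> G [G0 ->]; exists (map_poly intr G); split.
  by rewrite coef_map -horner_coef0 G0.
by rewrite evalZ_ev /Psi; apply: ev_eqp; rewrite map_liftp.
Qed.
End EvP.
Section Core.
Variable F : fieldType.
Local Notation T := {poly F}.

Lemma principal (I : T -> Prop) :
  (forall u v, I u -> I v -> I (u - v)) -> (forall q u, I u -> I (q * u)) ->
  forall u, I u -> u != 0 -> exists g, [/\ I g, g != 0 & forall v, I v -> g %| v].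
Proof.
move=> Isub Imul u Iu.
suff: forall n (u : T), (size u <= n)%N -> I u -> u != 0 ->
  exists g, [/\ I g, g != 0 & forall v, I v -> g %| v] by move=> H; apply: H (leqnn _) Iu.
elim=> [|n IH] {u Iu} u Hs Iu u0.
  by move: u0; rewrite -size_poly_eq0; move: Hs; rewrite leqn0 => ->.
case: (pselect (exists v, [/\ I v, v != 0 & (size v < size u)%N])).
  case=> v [Iv v0 Hv]; apply: (IH v) => //.
  by rewrite -ltnS (leq_trans Hv Hs).
move=> Hno; exists u; split => // v Iv.
have Im : I (v %% u).
  have -> : v %% u = v - v %/ u * u by rewrite {2}(divp_eq v u) addrC addKr.
  by apply: Isub => //; apply: Imul.
apply/modp_eq0P; case: (eqVneq (v %% u) 0) => [//|Hm]; exfalso.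
by apply: Hno; exists (v %% u); split => //; rewrite ltn_modp.
Qed.

Definition submod (A : (nat -> T) -> Prop) :=
  [/\ A (fun _ => 0), (forall u v, A u -> A v -> A (fun i => u i - v i)) &
      (forall q u, A u -> A (fun i => q * u i))].

Lemma submodD A u v : submod A -> A u -> A v -> A (fun i => u i + v i).
Proof.
case=> A0 AB _ Au Av.
have := AB _ _ Au (AB _ _ A0 Av); congr A; apply: funext => i.
by rewrite sub0r opprK.
Qed.

Lemma core k : forall A r, submod A ->
  (forall u, A u -> forall i, (k <= i)%N -> u i = 0) ->
  (forall i, (k <= i)%N -> r i = 0) -> ~ A r ->
  exists q : T, q != 0 /\ forall u v, A u -> r <> (fun i => u i + q * v i).
Proof.
elim: k => [|k IH] A r Asub Asupp rsupp nAr.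
  exfalso; apply: nAr; have -> : r = (fun _ => 0) by apply: funext => i; exact: rsupp.
  by case: Asub.
have [A0 AB AM] := Asub.
case: (pselect (exists u, A u /\ u k != 0)) => [[u1 [Au1 u1k]]|Hno].
  have [g [[ug [Aug ugk]] g0 gdiv]] : exists g, [/\ (exists u, A u /\ u k = g), g != 0 &
      forall v, (exists u, A u /\ u k = v) -> g %| v].
    apply: (principal (I := fun t => exists u, A u /\ u k = t)) (u1 k) _ u1k.
    - move=> s t [us [Aus <-]] [ut [Aut <-]]; exists (fun i => us i - ut i).
      by split => //; apply: AB.
    - move=> q s [us [Aus <-]]; exists (fun i => q * us i); split => //; exact: AM.
    - by exists u1.
  have gdivA : forall u, A u -> g %| u k by move=> u Au; apply: gdiv; exists u.
  case: (boolP (g %| r k)) => grk; last first.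
    exists g; split => // u v Au E; move: grk; rewrite E.
    by rewrite dvdp_add ?gdivA // dvdp_mulIl.
  set t := r k %/ g.
  have rkE : r k = t * g by rewrite divpK.
  pose A0' := fun u => A u /\ u k = 0.
  pose r0 := fun i => r i - t * ug i.
  have A0sub : submod A0'.
    split; first by split.
    - by move=> u v [Au uk] [Av vk]; split; [apply: AB | rewrite /= uk vk subrr].
    - by move=> q u [Au uk]; split; [apply: AM | rewrite /= uk mulr0].
  have [q0 [q00 Hq0]] : exists q : T, q != 0 /\
      forall u v, A0' u -> r0 <> (fun i => u i + q * v i).
    apply: IH => //.
    - move=> u [Au uk] i; rewrite leq_eqVlt => /orP [/eqP <- //|]; exact: Asupp.
    - move=> i; rewrite leq_eqVlt => /orP [/eqP <-|Hi]; first by rewrite /r0 rkE ugk subrr.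
      by rewrite /r0 rsupp ?Asupp ?mulr0 ?subr0.
    - move=> [Ar0 _]; apply: nAr.
      have := submodD Asub Ar0 (AM t _ Aug); congr A; apply: funext => i.
      by rewrite /r0 subrK.
  exists (q0 * g); split; first by rewrite mulf_neq0.
  move=> u v Au E.
  have [s us] : exists s, u k = s * g by exists (u k %/ g); rewrite divpK // gdivA.
  apply: (Hq0 (fun i => u i - s * ug i) (fun i => g * v i - v k * ug i)).
    by split; [apply: AB => //; apply: AM | rewrite /= us ugk subrr].
  have ts : t = s + q0 * v k.
    apply: (mulIf g0); have := congr1 (fun w => w k) E; rewrite /= -rkE us => ->.
    ring.
  apply: funext => i; rewrite /r0 (congr1 (fun w => w i) E) /= ts; ring.
have Asupp' : forall u, A u -> forall i, (k <= i)%N -> u i = 0.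
  move=> u Au i; rewrite leq_eqVlt => /orP [/eqP <-|]; last exact: Asupp.
  by case: (eqVneq (u k) 0) => // H; exfalso; apply: Hno; exists u.
case: (eqVneq (r k) 0) => rk0.
  apply: IH => // i; rewrite leq_eqVlt => /orP [/eqP <- //|]; exact: rsupp.
exists (r k * 'X); split; first by rewrite mulf_neq0 ?polyX_eq0.
move=> u v Au E; have := congr1 (fun w => w k) E; rewrite /= (Asupp' _ Au) // add0r.
move=> Erk; have H := dvdp_mulIl (r k * 'X) (v k); rewrite -Erk in H.
have := dvdp_leq rk0 H.
by rewrite size_mulX // ltnn.
Qed.
End Core.

Section Transfer.
Variable F : fieldType.
Local Notation T := {poly F}.
Variable f : T.
Hypothesis f1 : (1 < size f)%N.
Local Notation d := (size f).-1.

Definition Phi (v : nat -> T) : T := \sum_(i < d) 'X^i * (v i \Po f).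

Lemma PhiB u v : Phi (fun i => u i - v i) = Phi u - Phi v.
Proof.
rewrite /Phi -sumrB; apply: eq_bigr => i _; by rewrite comp_polyB mulrBr.
Qed.
Lemma PhiM q u : Phi (fun i => q * u i) = (q \Po f) * Phi u.
Proof.
rewrite /Phi mulr_sumr; apply: eq_bigr => i _; rewrite comp_polyM; ring.
Qed.
Lemma Phi0 : Phi (fun _ => 0) = 0.
Proof. by rewrite /Phi big1 // => i _; rewrite comp_poly0 mulr0. Qed.

Lemma Phi_surj (u : T) : exists v, (forall i, (d <= i)%N -> v i = 0) /\ Phi v = u.
Proof.
suff: forall n (u : T), (size u <= n)%N -> exists v, (forall i, (d <= i)%N -> v i = 0) /\ Phi v = u.
  by move=> H; apply: (H _ u (leqnn _)).
elim=> [|n IH] {}u Hs.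
  exists (fun _ => 0); split => //; rewrite Phi0; apply/esym/eqP.
  by rewrite -size_poly_leq0.
case: (eqVneq u 0) => [->|u0].
  by exists (fun _ => 0); split => //; rewrite Phi0.
have f0 : f != 0 by rewrite -size_poly_gt0 (ltn_trans _ f1).
have [v1 [v1s v1E]] : exists v, (forall i, (d <= i)%N -> v i = 0) /\ Phi v = u %/ f.
  apply: IH; rewrite size_divp //.
  have su : (0 < size u)%N by rewrite size_poly_gt0.
  rewrite -subn1; move: Hs su f1; move: (size u) (size f) => x y; clear; lia.
exists (fun i => if (i < d)%N then v1 i * 'X + ((u %% f)`_i)%:P else 0); split.
  by move=> i Hi; rewrite ltnNge Hi.
rewrite /Phi.
have -> : \sum_(i < d) 'X^i * ((if (i < d)%N then v1 i * 'X + ((u %% f)`_i)%:P else 0) \Po f)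
  = (\sum_(i < d) 'X^i * (v1 i \Po f)) * f + \sum_(i < d) (u %% f)`_i *: 'X^i.
  rewrite mulr_suml -big_split; apply: eq_bigr => i _ /=; rewrite ltn_ord.
  rewrite comp_polyD comp_polyM comp_polyX comp_polyC -mul_polyC; ring.
rewrite -poly_def -/(Phi v1) v1E.
have -> : \poly_(i < d) (u %% f)`_i = u %% f.
  apply/polyP => j; rewrite coef_poly; case: ltnP => // Hj.
  rewrite nth_default // (leq_trans _ Hj) // -ltnS prednK ?ltn_modp //.
  by rewrite (ltn_trans _ f1).
by rewrite -divp_eq.
Qed.

Lemma poly_sep (A : T -> Prop) (r : T) :
  A 0 -> (forall u v, A u -> A v -> A (u - v)) -> (forall u, A u -> A (f * u)) ->
  (forall c u, A u -> A (c%:P * u)) -> ~ A r ->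
  exists h : T, h != 0 /\ forall u w, A u -> r <> u + h * w.
Proof.
move=> A0 AB Af AC nAr.
have AD : forall u v, A u -> A v -> A (u + v).
  by move=> u v Au Av; have := AB _ _ Au (AB _ _ A0 Av); rewrite sub0r opprK.
have Acomp : forall q u, A u -> A ((q \Po f) * u).
  elim/poly_ind => [|q c IHq] u Au; first by rewrite comp_poly0 mul0r.
  rewrite comp_polyD comp_polyM comp_polyX comp_polyC mulrDl -mulrA.
  by apply: AD; [apply: IHq; apply: Af | apply: AC].
pose A' := fun v => (forall i, (d <= i)%N -> v i = 0) /\ A (Phi v).
have A'sub : submod A'.
  split.
  - by split => //; rewrite Phi0.
  - move=> u v [us Au] [vs Av]; split; last by rewrite PhiB; apply: AB.
    by move=> i Hi; rewrite us ?vs ?subrr.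
  - move=> q u [us Au]; split; last by rewrite PhiM; apply: Acomp.
    by move=> i Hi; rewrite us ?mulr0.
have [r' [r's r'E]] := Phi_surj r.
have [q [q0 Hq]] : exists q : T, q != 0 /\ forall u v, A' u -> r' <> (fun i => u i + q * v i).
  have H := @core F (size f).-1 A' r' A'sub; apply: H => //; first by move=> u [us _].
  by rewrite /A' => -[_]; rewrite r'E.
exists (q \Po f); split; first by rewrite comp_poly_eq0.
move=> u w Au E.
have [v [vs vE]] := Phi_surj w.
apply: (Hq (fun i => r' i - q * v i) v).
  split; first by move=> i Hi; rewrite r's ?vs ?mulr0 ?subrr.
  by rewrite PhiB PhiM r'E vE E addrK.
by apply: funext => i; rewrite subrK.
Qed.
End Transfer.

Section CompClosed.
Variable F : fieldType.
Lemma comp_closed (A : {poly F} -> Prop) (f : {poly F}) :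
  A 0 -> (forall u v, A u -> A v -> A (u - v)) -> (forall u, A u -> A (f * u)) ->
  (forall c u, A u -> A (c%:P * u)) -> forall q u, A u -> A ((q \Po f) * u).
Proof.
move=> A0 AB Af AC.
have AD : forall u v, A u -> A v -> A (u + v).
  by move=> u v Au Av; have := AB _ _ Au (AB _ _ A0 Av); rewrite sub0r opprK.
elim/poly_ind => [|q c IHq] u Au; first by rewrite comp_poly0 mul0r.
rewrite comp_polyD comp_polyM comp_polyX comp_polyC mulrDl -mulrA.
by apply: AD; [apply: IHq; apply: Af | apply: AC].
Qed.
End CompClosed.

Definition nu_of (Q : nzRingType) : nuRing :=
  @NuRing Q 0 +%R -%R *%R (@addrA Q) (@addrC Q) (@add0r Q) (@addNr Q)
    (@mulrA Q) (@mulrDl Q) (@mulrDr Q).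

Lemma qeq (F : fieldType) (hm : {poly F}) (hs : (1 < size hm)%N) (hmon : hm \is monic)
  (u v : {poly F}) : in_qpoly hm u = in_qpoly hm v <-> hm %| u - v.
Proof.
have mk : mk_monic hm = hm by rewrite /mk_monic hs hmon.
have E w : (in_qpoly hm w = 0) <-> hm %| w.
  split => [Hw|Hw].
    apply/modp_eq0P; rewrite Pdiv.IdomainMonic.modpE // -mk.
    by have := congr1 val Hw.
  apply: val_inj => /=; rewrite mk -Pdiv.IdomainMonic.modpE //; exact: modp_eq0.
rewrite -E raddfB /=; split => [->|/eqP]; first by rewrite subrr.
by rewrite subr_eq0 => /eqP.
Qed.

Definition pre (R : nuRing) (a : R) (p : nat) (x : R) : {poly 'F_p} :=
  match pselect (exists g : {poly 'F_p}, g`_0 = 0 /\ @Psi R a p g = x) with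
  | left e => projT1 (cid e)
  | right _ => 0
  end.

Lemma preP (R : nuRing) (a : R) (p : nat) (x : R) :
  (exists g : {poly 'F_p}, g`_0 = 0 /\ @Psi R a p g = x) ->
  (pre a p x)`_0 = 0 /\ @Psi R a p (pre a p x) = x.
Proof. by move=> e; rewrite /pre; case: pselect => // e'; exact: projT2 (cid e'). Qed.

Theorem mainTheorem15 (R : nuRing) (a : R) (p : nat) :
  prime p -> nu_natmul p a = nu_zero R ->
  finitely_separable_sub (Zgen a).
Proof.
move=> pp pa r A Sr Asub AS nAr.
have [Az Asb Amul] := Asub.
pose Ps := @Psi R a p.
have PsD : forall g h, Ps (g + h) = Ps g + Ps h := PsiD pp pa.
have PsB : forall g h, Ps (g - h) = Ps g - Ps h := PsiB pp pa.
have Ps0 : Ps 0 = 0 := Psi0 pp pa.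
have PsMn : forall g n, Ps (g *+ n) = Ps g *+ n := PsiMn pp pa.
have PsM : forall g h : {poly 'F_p}, g`_0 = 0 -> h`_0 = 0 -> Ps (g * h) = rmul (Ps g) (Ps h) := PsiM pp pa.
pose At := fun g : {poly 'F_p} => g`_0 = 0 /\ A (Ps g).
pose Kp := fun g : {poly 'F_p} => g`_0 = 0 /\ Ps g = 0.
have At0 : At 0 by split; [rewrite coef0 | rewrite Ps0; exact: Az].
have AtB : forall u v, At u -> At v -> At (u - v).
  move=> u v [u0 Au] [v0 Av]; split; first by rewrite coefB u0 v0 subrr.
  by rewrite PsB; exact: Asb.
have AtD : forall u v, At u -> At v -> At (u + v).
  by move=> u v Au Av; have := AtB _ _ Au (AtB _ _ At0 Av); rewrite sub0r opprK.
have AtMn : forall u n, At u -> At (u *+ n).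
  by move=> u n Au; elim: n => [|n IH]; rewrite ?mulr0n // mulrS; apply: AtD.
have cE : forall (c : 'F_p) (u : {poly 'F_p}), c%:P * u = u *+ (nat_of_ord c).
  by move=> c u; rewrite mul_polyC -scaler_nat natr_Zp.
have AtC : forall c u, At u -> At (c%:P * u) by move=> c u Au; rewrite cE; apply: AtMn.
have KB : forall u v, Kp u -> Kp v -> Kp (u - v).
  move=> u v [u0 Au] [v0 Av]; split; first by rewrite coefB u0 v0 subrr.
  by rewrite PsB Au Av subrr.
have K0 : Kp 0 by split; [rewrite coef0 | exact: Ps0].
have KM : forall q u, Kp u -> Kp (q * u).
  move=> q u Ku; rewrite -[q]comp_polyXr; apply: comp_closed => //.
  - move=> v [v0 Kv]; split; first by rewrite coef0M v0 mulr0.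
    by rewrite PsM ?coefX // Kv rmulr0.
  - move=> c v [v0 Kv]; rewrite cE; split; first by rewrite coefMn v0 mul0rn.
    by rewrite PsMn Kv mul0rn.
have Ex_r := Zgen_Psi pp pa Sr.
have [pr0 Psr0] := preP Ex_r.
have Psr : Ps (pre a p r) = r := Psr0.
have nAt : ~ At (pre a p r) by move=> [_]; rewrite Psr.
have [h [h0 [hK hA]]] : exists h : {poly 'F_p}, h != 0 /\ (forall k, Kp k -> h %| k) /\
    (forall u w, At u -> pre a p r <> u + h * w).
  case: (pselect (exists k, Kp k /\ k != 0)) => [[k [Kk k0]]|noK].
    have [g [Kg g0 gd]] := principal KB KM Kk k0.
    exists g; split => //; split => // u w [u0 Au] E; apply: nAr.
    have Kgw : Kp (g * w) by rewrite mulrC; apply: KM.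
    by move: Au; rewrite -Psr E PsD (proj2 Kgw) addr0.
  have K0' : forall k, Kp k -> k = 0.
    by move=> k Kk; case: (eqVneq k 0) => // k0; exfalso; apply: noK; exists k.
  have [f [f1 Af]] : exists f : {poly 'F_p}, (1 < size f)%N /\ (forall u, At u -> At (f * u)).
    case: (pselect (exists g, At g /\ g != 0)) => [[g [Ag g0]]|noA].
      exists g; split.
        rewrite ltnNge; apply/negP => /size1_polyC gE.
        by move: g0; rewrite gE (proj1 Ag) eqxx.
      move=> u [u0 Au]; split; first by rewrite coef0M u0 mulr0.
      by rewrite PsM ?(proj1 Ag) //; apply: Amul => //; case: Ag.
    exists 'X; split; first by rewrite size_polyX.
    move=> u Au; case: (eqVneq u 0) => [->|u0]; first by rewrite mulr0.
    by exfalso; apply: noA; exists u.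
  have [h [h0 hA]] := poly_sep f1 At0 AtB Af AtC nAt.
  by exists h; split => //; split => // k /K0' ->; exact: dvdp0.
have hs : (1 < size h)%N.
  rewrite ltnNge; apply/negP => /size1_polyC hE.
  set c := h`_0 in hE.
  have c0 : c != 0 by apply: contraNneq h0 => c0; rewrite hE c0.
  apply: (hA 0 (c^-1%:P * pre a p r) At0).
  by rewrite add0r mulrA hE -polyCM mulfV // mul1r.
set c := (lead_coef h)^-1.
have c0 : c != 0 by rewrite invr_eq0 lead_coef_eq0.
set hm := c *: h.
have hmon : hm \is monic by rewrite monicE lead_coefZ mulVf // lead_coef_eq0.
have hms : (1 < size hm)%N by rewrite size_scale.
have hmK : forall k, Kp k -> hm %| k by move=> k Kk; rewrite dvdpZl // hK.
have hmA : forall u w, At u -> pre a p r <> u + hm * w.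
  by move=> u w Au; rewrite -scalerAl scalerAr; apply: hA.
have ExD : forall x y, Zgen a x -> Zgen a y ->
    exists g : {poly 'F_p}, g`_0 = 0 /\ Psi a g = nu_add x y.
  move=> x y Sx Sy; have [x0 Px] := preP (Zgen_Psi pp pa Sx).
  have [y0 Py] := preP (Zgen_Psi pp pa Sy).
  exists (pre a p x + pre a p y); split; first by rewrite coefD x0 y0 addr0.
  by rewrite (PsiD pp pa) Px Py.
have ExM : forall x y, Zgen a x -> Zgen a y ->
    exists g : {poly 'F_p}, g`_0 = 0 /\ Psi a g = nu_mul x y.
  move=> x y Sx Sy; have [x0 Px] := preP (Zgen_Psi pp pa Sx).
  have [y0 Py] := preP (Zgen_Psi pp pa Sy).
  exists (pre a p x * pre a p y); split; first by rewrite coef0M x0 y0 mulr0.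
  by rewrite (PsiM pp pa) // Px Py.
pose Q := {poly %/ hm}.
exists (nu_of Q), (fun x => in_qpoly hm (pre a p x)); split; last split.
- exists #|{: Q}|, (@enum_val Q (mem {: Q})) => x.
  by exists (enum_rank x); rewrite enum_rankK.
- split.
  + move=> x y Sx Sy; have [x0 Px] := preP (Zgen_Psi pp pa Sx).
    have [y0 Py] := preP (Zgen_Psi pp pa Sy).
    have [s0 Ps'] := preP (ExD _ _ Sx Sy).
    rewrite /= -raddfD /=; apply/qeq => //; apply: hmK; split.
      by rewrite coefB coefD s0 x0 y0 addr0 subrr.
    rewrite PsB PsD /Ps Ps' Px Py; exact: subrr.
  + move=> x y Sx Sy; have [x0 Px] := preP (Zgen_Psi pp pa Sx).
    have [y0 Py] := preP (Zgen_Psi pp pa Sy).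
    have [s0 Ps'] := preP (ExM _ _ Sx Sy).
    rewrite /= -rmorphM /=; apply/qeq => //; apply: hmK; split.
      by rewrite coefB coef0M s0 x0 y0 mulr0 subrr.
    rewrite PsB PsM // /Ps Ps' Px Py; exact: subrr.
- move=> [x [Ax E]]; have [x0 Px] := preP (Zgen_Psi pp pa (AS _ Ax)).
  move/qeq: E => /(_ hms hmon) /dvdpP [w Ew].
  apply: (hmA (pre a p x) (- w)).
    by split => //; rewrite /Ps Px.
  by rewrite mulrN mulrC -Ew opprB addrC subrK.
Qed.
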